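(* Fix a bin size $B\in\mathbb{N}$, $B\ge 1$, with bin boundaries $L_j=jB$ for $j=1,2,\ldots$, and a level $\alpha\in(0,1)$. Let $T^{(1)},\ldots,T^{(n)},T^{(n+1)}$ be independent and identically distributed random token sequences (reasoning traces), where $T^{(1)},\dots,T^{(n)}$ form the calibration set and $T^{(n+1)}$ is the test trace. For a trace $T$ and prefix length $\ell>0$ let $u(T;\ell)$ be the number of keyword arrivals in the prefix $T[1:\ell]$ divided by $\ell$, and write $u_i(L_j)=u(T^{(i)};L_j)$. For each $i\in\{1,\ldots,n+1\}$ define $$M_i=\max_{j:\,L_j\le |T^{(i)}|} u_i(L_j),$$ with the convention that $M_i=-\infty$ if no boundary satisfies $L_j\le|T^{(i)}|$. Let $k=\lceil (n+1)(1-\alpha)\rceil$ and set $\tau^\star=M_{(k)}$, the $k$-th smallest of $M_1,\ldots,M_n$, with $\tau^\star=+\infty$ if $k>n$. Then $$\mathbb{P}\big(\exists j \text{ with } L_j\le |T^{(n+1)}|:\ u_{n+1}(L_j)>\tau^\star\big)=\mathbb{P}(M_{n+1}>\tau^\star)\le\alpha.$$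
   Context: A reasoning trace $T=(t_1,\ldots,t_L)$ is a finite sequence of tokens of length $|T|=L$. A fixed finite set $\mathcal{K}$ of keyword phrases is given, and the ''keyword arrivals'' in a trace are a deterministic set of token positions determined by $\mathcal{K}$ (positions at which a keyword phrase is detected by a fixed deterministic matching procedure); thus $u(T;\ell)$ is a deterministic function of $T$ and $\ell$. The stopping rule halts a test trace at the first bin boundary $L_j$ at which $u(T;L_j)>\tau^\star$; the event bounded is the event that the test trace is stopped. *)

(* Defs.v *)
From mathcomp Require Import all_boot all_order all_algebra.
From mathcomp Require Import all_classical all_reals all_analysis.
Set Implicit Arguments. Unset Strict Implicit. Unset Printing Implicit Defensive.
Import Order.TTheory GRing.Theory Num.Theory.
Local Open Scope ring_scope.
Local Open Scope ereal_scope.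
Local Open Scope classical_set_scope.

Section Defs.
Variables (R : realType) (Tok : Type).

(* arr T p : a keyword arrival is detected at (1-indexed) position p of trace T.
   It is an arbitrary deterministic function of the trace (the fixed matching
   procedure for the keyword set K). *)

Definition u (arr : seq Tok -> nat -> bool) (T : seq Tok) (l : nat) : R :=
  ((count (arr T) (iota 1 l))%:R / l%:R)%R.

Definition Mval (arr : seq Tok -> nat -> bool) (B : nat) (T : seq Tok) : \bar R :=
  \big[Order.max/-oo]_(1 <= j < (size T %/ B).+1) (u arr T (j * B))%:E.

Definition kidx (alpha : R) (n : nat) : nat :=
  `|Num.ceil ((n.+1)%:R * (1 - alpha))%R|%N.

Definition kth_smallest (s : seq (\bar R)) (k : nat) : \bar R :=
  if (size s < k)%N then +oo else nth +oo (sort <=%O s) k.-1.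

Definition tau_star (arr : seq Tok -> nat -> bool) (B : nat) (alpha : R)
  (n : nat) (cal : 'I_n -> seq Tok) : \bar R :=
  kth_smallest [seq Mval arr B (cal i) | i <- enum 'I_n] (kidx alpha n).

End Defs.

(* mutual independence + identical distribution of the n+1 traces
   (discrete sigma-algebra on traces: every preimage is an event) *)
Definition iid_traces d (Omega : measurableType d) (R : realType) (Tok : Type)
  (P : probability Omega R) (m : nat) (T : 'I_m.+1 -> Omega -> seq Tok) : Prop :=
  [/\ (forall i (A : set (seq Tok)), measurable (T i @^-1` A)),
      (forall A : 'I_m.+1 -> set (seq Tok),
         P (\bigcap_(i in [set: 'I_m.+1]) (T i @^-1` A i))
         = \prod_(i < m.+1) P (T i @^-1` A i))
    & (forall i (A : set (seq Tok)), P (T i @^-1` A) = P (T ord0 @^-1` A))].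

(* Main.v *)
From HB Require Import structures.
Require Import Defs.
From mathcomp Require Import all_boot all_order all_algebra.
From mathcomp Require Import all_classical all_reals all_analysis.
From mathcomp Require Import fingroup perm.
Import Order.TTheory GRing.Theory Num.Theory.
Local Open Scope ring_scope.
Local Open Scope ereal_scope.
Local Open Scope classical_set_scope.

Lemma kth_lt (R : realType) (s : seq (\bar R)) k v : (0 < k)%N ->
  (kth_smallest s k < v) = (k <= count (fun y => (y < v)%E) s)%N.
Proof.
case: k => // k _; rewrite /kth_smallest.
case: ltnP => hs.
  rewrite ltNge leey /=; apply/esym/negbTE; rewrite -ltnNge.
  exact: leq_ltn_trans (count_size _ _) hs.
rewrite -(count_sort <=%O) /=.
have st : sorted <=%O (sort <=%O s) by apply: sort_le_sorted.
have sz : size (sort <=%O s) = size s by rewrite size_sort.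
set t := sort <=%O s in st sz *; clearbody t.
have szt : size (take k.+1 t) = k.+1.
  rewrite size_take sz; case: (ltnP k.+1 (size s)) => // h; apply/eqP.
  by rewrite eqn_leq h hs.
case: (ltP (nth +oo t k) v) => hk.
  rewrite -[in RHS](cat_take_drop k.+1 t) count_cat.
  have : all (fun y => y < v) (take k.+1 t).
    apply/(all_nthP +oo) => i; rewrite szt => hi; rewrite nth_take //.
    apply: le_lt_trans hk; apply: le_sorted_leq_nth => //.
    - by rewrite unfold_in /= sz; exact: leq_trans hi hs.
    - by rewrite unfold_in /= sz.
  by rewrite all_count => /eqP ->; rewrite szt leq_addr.
rewrite -[in RHS](cat_take_drop k t) count_cat.
have : count (fun y => y < v) (drop k t) = 0%N.
  apply/eqP; rewrite -leqn0 leqNgt -has_count; apply/negP => /(has_nthP +oo).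
  case=> i; rewrite size_drop => hi; rewrite nth_drop; apply/negP; rewrite -leNgt.
  apply: le_trans hk _; apply: le_sorted_leq_nth => //.
  - by rewrite unfold_in /= sz.
  - by rewrite unfold_in /= -ltn_subRL.
  - by rewrite leq_addr.
move=> ->; rewrite addn0; apply/esym/negbTE; rewrite -leqNgt.
apply: leq_trans (count_size _ _) _; rewrite size_take; case: ltnP => //.
Qed.


Lemma lt_bigmax_seq (R : realType) (r : seq nat) (F : nat -> \bar R) x :
  (x < \big[Order.max/-oo]_(j <- r) F j) <-> exists2 j, j \in r & x < F j.
Proof.
elim: r => [|a r IH]; rewrite ?big_nil ?big_cons.
  by split; [rewrite ltNge leNye | case].
rewrite lt_max; split.
  case/orP => [h|/IH [j jr h]]; first by exists a; rewrite ?mem_head.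
  by exists j; rewrite // inE jr orbT.
case=> j; rewrite inE => /orP [/eqP -> -> //| jr h].
by apply/orP; right; apply/IH; exists j.
Qed.

Lemma count_enum_ord n (p : pred 'I_n) : count p (enum 'I_n) = (\sum_(i < n) p i)%N.
Proof. rewrite -sum1_count big_mkcond /= big_enum /=; apply: eq_bigr => i _; by case: (p i). Qed.

Section Count.
Variables (R : realType) (m : nat).

Definition cnt (x : 'I_m.+1 -> \bar R) i : nat :=
  (\sum_(j < m.+1) ((x j < x i)%E : nat))%N.

Lemma cnt_card x i : cnt x i = #|[pred j | (x j < x i)%E]|.
Proof.
rewrite /cnt -sum1_card [RHS]big_mkcond /=; apply: eq_bigr => j _.
by rewrite unfold_in /=; case: (x j < x i).
Qed.

Lemma count_bound (k : nat) x :
  (\sum_(i < m.+1) ((k <= cnt x i)%N : nat) <= m.+1 - k)%N.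
Proof.
set S := finset (fun i => (k <= cnt x i)%N).
have -> : (\sum_(i < m.+1) ((k <= cnt x i)%N : nat))%N = #|S|.
  rewrite -sum1_card [RHS]big_mkcond /=; apply: eq_bigr => j _.
  by rewrite inE; case: (k <= cnt x j)%N.
case: (set_0Vmem S) => [->|[i0 i0S]]; first by rewrite cards0.
case: (arg_minP x i0S) => im imS hmin.
have h1 : (k <= #|[pred j | (x j < x im)%E]|)%N.
  have h : im \in S := imS. by move: h; rewrite inE cnt_card.
have h2 : (#|[pred j | (x j < x im)%E]| <= #|~: S|)%N.
  apply: subset_leq_card; apply/fintype.subsetP => j; rewrite unfold_in /= inE => hj.
  apply/negP => jS; have := hmin j jS; by rewrite leNgt hj.

have h3 := leq_trans h1 h2; have := cardsC S; rewrite card_ord => e.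
rewrite -[X in (_ <= X - k)%N]e leq_subRL; first by rewrite addnC leq_add2l.
exact: leq_trans h3 (leq_addl _ _).
Qed.

End Count.
Arguments cnt {R m}.

Section Exch.
Variables (R : realType) (d : measure_display) (Omega : measurableType d)
  (P : probability Omega R) (m : nat) (Y : 'I_m.+1 -> Omega -> \bar R).
Hypothesis hm : forall i (A : set (\bar R)), measurable (Y i @^-1` A).
Hypothesis hprod : forall A : 'I_m.+1 -> set (\bar R),
  P (\bigcap_(i in [set: 'I_m.+1]) (Y i @^-1` A i))
  = \prod_(i < m.+1) P (Y i @^-1` A i).
Hypothesis hid : forall i (A : set (\bar R)), P (Y i @^-1` A) = P (Y ord0 @^-1` A).

Definition Rect : set (set ('I_m.+1 -> \bar R)) :=
  [set S | exists A : 'I_m.+1 -> set (\bar R), S = [set x | forall i, A i (x i)]].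

Definition ZT := g_sigma_algebraType Rect.

Definition Yv (s : {perm 'I_m.+1}) (w : Omega) : ZT := fun i => Y (s i) w.

Lemma Yv_rect s (A : 'I_m.+1 -> set (\bar R)) :
  Yv s @^-1` [set x | forall i, A i (x i)] =
  \bigcap_(i in [set: 'I_m.+1]) (Y i @^-1` A (s^-1 i)%g).
Proof.
apply/seteqP; split => w /=.
  by move=> h i _ /=; have := h (s^-1 i)%g; rewrite /Yv permKV.
by move=> h i; have := h (s i) I; rewrite /= /Yv permK.
Qed.

Lemma mbigcap (A : 'I_m.+1 -> set (\bar R)) :
  measurable (\bigcap_(i in [set: 'I_m.+1]) (Y i @^-1` A i)).
Proof.
apply: fin_bigcap_measurable => //; exact: finite_setT.
Qed.

Lemma mYv s : measurable_fun setT (Yv s).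
Proof.
apply: (@measurability _ _ Omega ZT setT (Yv s) Rect erefl).
move=> _ [B [A ->] <-]; rewrite setTI Yv_rect; exact: mbigcap.
Qed.

Section PF.
Variable s : {perm 'I_m.+1}.
Definition pf := pushforward P (Yv s).

Let pf0 : pf set0 = 0.
Proof. by rewrite /pf /pushforward preimage_set0 measure0. Qed.

Let pf_ge0 A : 0 <= pf A.
Proof. exact: (measure_ge0 P). Qed.

Let pf_sa : semi_sigma_additive pf.
Proof.
move=> F mF tF mUF; rewrite /pf /pushforward preimage_bigcup.
apply: measure_semi_sigma_additive.
- by move=> n; rewrite -[X in measurable X]setTI; exact: mYv.
- apply/trivIsetP => /= i j _ _ ij; rewrite -preimage_setI.
  by move/trivIsetP : tF => /(_ _ _ _ _ ij) ->//; rewrite preimage_set0.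
- by rewrite -preimage_bigcup -[X in measurable X]setTI; exact: mYv.
Qed.

HB.instance Definition _ := isMeasure.Build _ _ _ pf pf0 pf_ge0 pf_sa.
End PF.

Lemma exch s (S : set ZT) : measurable S ->
  P (Yv 1%g @^-1` S) = P (Yv s @^-1` S).
Proof.
move=> mS.
change (pf 1%g S = pf s S).
have mu := @measure_unique _ R ZT Rect (fun _ => setT) erefl.
refine (mu _ _ _ (pf 1%g) (pf s) _ _ S mS).
- move=> _ _ [A ->] [A' ->]; exists (fun i => A i `&` A' i).
  by apply/seteqP; split => x /=; [move=> [h1 h2] i; split|move=> h; split=> i; case: (h i)].
- by move=> _; exists (fun _ => setT); apply/seteqP; split.
- by rewrite bigcup_const.
- move=> _ [A ->]; change (P (Yv 1%g @^-1` [set x | forall i, A i (x i)]) = P (Yv s @^-1` [set x | forall i, A i (x i)])).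
  rewrite !Yv_rect !hprod.
  under eq_bigr do rewrite hid; under [RHS]eq_bigr do rewrite hid.
  rewrite [RHS](reindex_inj (@perm_inj _ s)) /=.
  by apply: eq_bigr => i _; rewrite invg1 perm1 permK.
- move=> _.
  apply: (@le_lt_trans _ _ 1%E); last exact: ltry.
  exact: (probability_le1 P (@measurableT _ Omega)).
Qed.


Lemma mproj j : @measurable_fun _ _ ZT (measurable_realfun.constructive_ereal_extended__canonical__measurable_structure_SigmaRing R) setT (fun x => x j).
Proof.
move=> _ B _; rewrite setTI; apply: sub_sigma_algebra.
exists (fun l => if l == j then B else setT).
apply/seteqP; split => x /=.
  by move=> h l; case: eqP => [->|].
by move=> h; have := h j; rewrite eqxx.
Qed.

Lemma mlt i j : measurable [set x : ZT | x j < x i].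
Proof. by rewrite -[X in measurable X]setTI; apply: measurable_lte => //; exact: mproj. Qed.

Lemma msum (b : 'I_m.+1 -> ZT -> bool) (hb : forall j, measurable [set x | b j x])
  r k : measurable [set x : ZT | (k <= \sum_(j <- r) (b j x : nat))%N].
Proof.
elim: r k => [|a r IH] [|k].
- by rewrite [X in measurable X](_ : _ = setT) //; apply/seteqP; split.
- rewrite [X in measurable X](_ : _ = set0) //; apply/seteqP; split => x //=.
  by rewrite big_nil.
- by rewrite [X in measurable X](_ : _ = setT) //; apply/seteqP; split.
- rewrite [X in measurable X](_ : _ = ([set x | b a x] `&` [set x : ZT | (k <= \sum_(j <- r) (b j x : nat))%N]) `|` [set x : ZT | (k.+1 <= \sum_(j <- r) (b j x : nat))%N]).
    by apply: measurableU => //; apply: measurableI.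
  apply/seteqP; split => x /=; rewrite big_cons.
    by case: (b a x) => /= h; [case: (leqP k.+1 (\sum_(j <- r) b j x)) => h'; [right|left]|right].
  case=> [[-> h]|h]; first by rewrite add1n ltnS.
  exact: leq_trans h (leq_addl _ _).
Qed.

Lemma mAset k i : measurable [set x : ZT | (k <= cnt x i)%N].
Proof. exact: (msum (fun j x => x j < x i) (fun j => mlt i j)). Qed.

Definition E k i : set Omega := Yv 1%g @^-1` [set x : ZT | (k <= cnt x i)%N].

Lemma mE k i : measurable (E k i).
Proof. by rewrite -[X in measurable X]setTI; apply: (mYv 1%g) => //; exact: mAset. Qed.

Lemma sumP k : \sum_(i < m.+1) P (E k i) <= ((m.+1 - k)%:R)%:E.
Proof.
have h i : P (E k i) = \int[P]_(w in setT) (\1_(E k i) w)%:E.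
  by rewrite integral_indic // ?setIT //; exact: mE.
rewrite (eq_bigr _ (fun i _ => h i)) -ge0_integral_sum //; last first.
- move=> i; apply/measurable_realfun.measurable_EFinP.
  exact: measurable_realfun.measurable_indic (mE k i).
have -> : ((m.+1 - k)%:R)%:E = \int[P]_(w in setT) (cst ((m.+1 - k)%:R)%:E w).
  by rewrite integral_cst // -[LHS]mule1; congr (_ * _); apply/esym; exact: probability_setT.
apply: ge0_le_integral => //.
- by move=> w _; apply: sume_ge0 => i _; rewrite lee_fin indicE.
- apply: emeasurable_sum => i; apply/measurable_realfun.measurable_EFinP.
  exact: measurable_realfun.measurable_indic (mE k i).
- move=> w _; rewrite sumEFin lee_fin.
  rewrite (eq_bigr (fun i => ((k <= cnt (Yv 1%g w) i)%N : nat)%:R)); last first.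
    move=> i _; rewrite indicE /E; case hc: (k <= cnt (Yv 1%g w) i)%N.
      by rewrite mem_set.
    by rewrite memNset //= hc.
  by rewrite -natr_sum ler_nat count_bound.
Qed.

Lemma E_swap k i : P (E k i) = P (E k ord_max).
Proof.
rewrite /E (exch (tperm i ord_max) _ (mAset k ord_max)).
congr (P _); apply/seteqP; split => w /=;
  suff -> : cnt (Yv (tperm i ord_max) w) ord_max = cnt (Yv 1%g w) i by [].
all: rewrite /cnt /Yv tpermR perm1 [in RHS](reindex_inj (@perm_inj _ (tperm i ord_max))) /=.
all: by apply: eq_bigr => j _; rewrite perm1.
Qed.

Lemma main_ineq k : ((m.+1%:R)%:E * P (E k ord_max) <= ((m.+1 - k)%:R)%:E)%E.
Proof.
apply: le_trans (sumP k).
rewrite (eq_bigr (fun _ => P (E k ord_max))); last by move=> i _; exact: E_swap.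
by rewrite sumr_const card_ord mule_natl.
Qed.

End Exch.

Theorem proposition1 (R : realType) (d : measure_display)
  (Omega : measurableType d) (P : probability Omega R)
  (Tok : Type) (arr : seq Tok -> nat -> bool)
  (B : nat) (hB : (0 < B)%N) (alpha : R) (ha0 : (0 < alpha)%R) (ha1 : (alpha < 1)%R)
  (n : nat) (T : 'I_n.+1 -> Omega -> seq Tok)
  (hiid : iid_traces P T) :
  let tau w := tau_star arr B alpha (fun i : 'I_n => T (widen_ord (leqnSn n) i) w) in
  let test w := T ord_max w in
  P [set w | exists j : nat, [/\ (1 <= j)%N, (j * B <= size (test w))%N
                               & tau w < (u R arr (test w) (j * B))%:E]]
    = P [set w | tau w < Mval R arr B (test w)]
  /\ P [set w | tau w < Mval R arr B (test w)] <= alpha%:E.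
Proof.
move=> tau test.
case: hiid => hT1 hT2 hT3.
pose Y := fun i w => Mval R arr B (T i w).
have hm : forall i A, measurable (Y i @^-1` A) :=
  fun i A => hT1 i (Mval R arr B @^-1` A).
have hprod : forall A : 'I_n.+1 -> set (\bar R),
    P (\bigcap_(i in [set: 'I_n.+1]) (Y i @^-1` A i)) = \prod_(i < n.+1) P (Y i @^-1` A i) :=
  fun A => hT2 (fun i => Mval R arr B @^-1` A i).
have hid : forall i A, P (Y i @^-1` A) = P (Y ord0 @^-1` A) :=
  fun i A => hT3 i (Mval R arr B @^-1` A).
pose k := kidx alpha n.
set x := ((n.+1)%:R * (1 - alpha))%R.
have x0 : (0 < x)%R by rewrite mulr_gt0 // subr_gt0.
have xn : (x < n.+1%:R)%R.
  by rewrite /x -[X in (_ < X)%R]mulr1 ltr_pM2l // ltrBlDr ltrDl.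
have cge0 : (0 <= Num.ceil x)%R by rewrite ceil_ge0 (lt_trans _ x0) // ltrN10.
have kR : (k%:R = (Num.ceil x)%:~R :> R)%R.
  by rewrite /k /kidx -/x natr_absz ger0_norm.
have kx : (x <= k%:R)%R by rewrite kR ceil_ge.
have k0 : (0 < k)%N by rewrite -(ltr0n R); exact: lt_le_trans x0 kx.
have kn : (k <= n.+1)%N.
  rewrite -(ler_nat R) kR -[X in (_ <= X)%R]/((n.+1)%:~R) ler_int ceil_le_int.
  exact: ltW.
have e1 : forall w, (\sum_(i < n) ((Y ((1%g : {perm 'I_n.+1}) (widen_ord (leqnSn n) i)) w < Y ord_max w)%E : nat))%N
   = (\sum_(i < n) ((Y (widen_ord (leqnSn n) i) w < Y ord_max w)%E : nat))%N.
  by move=> w; apply: eq_bigr => i _; rewrite perm1.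
have set1 : [set w | tau w < Mval R arr B (test w)] = E _ _ _ _ Y k ord_max.
  apply/seteqP; split => w /=; rewrite /tau /tau_star kth_lt // count_map count_enum_ord;
  by rewrite /E /preimage /= /cnt /Yv big_ord_recr /= !perm1 ltxx addn0 e1.
have set0 : [set w | exists j : nat, [/\ (1 <= j)%N, (j * B <= size (test w))%N
                               & tau w < (u R arr (test w) (j * B))%:E]]
    = [set w | tau w < Mval R arr B (test w)].
  apply/seteqP; split => w /=; rewrite /Mval.
    case=> j [j1 jB h]; apply/lt_bigmax_seq; exists j => //.
    by rewrite mem_index_iota j1 ltnS leq_divRL.
  move/lt_bigmax_seq => [j]; rewrite mem_index_iota => /andP [j1 jN] h.
  by exists j; split => //; rewrite -leq_divRL // -ltnS.
split; first by rewrite set0.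
rewrite set1.
have := main_ineq _ _ _ P _ Y hm hprod hid k.
have mEk := mE _ _ _ _ Y hm k ord_max.
have p0 : 0 <= P (E _ _ _ _ Y k ord_max) by exact: measure_ge0.
have p1 : P (E _ _ _ _ Y k ord_max) <= 1 by exact: probability_le1.
have pf : P (E _ _ _ _ Y k ord_max) \is a fin_num.
  by rewrite ge0_fin_numE // (le_lt_trans p1) ?ltry.
rewrite -(fineK pf) -EFinM !lee_fin natrB // => h.
have h2 : ((n.+1)%:R * fine (P (E _ _ _ _ Y k ord_max)) <= (n.+1)%:R * alpha)%R.
  apply: le_trans h _; rewrite lerBlDr -lerBlDl; apply: le_trans kx.
  by rewrite /x mulrBr mulr1.
by rewrite ler_pM2l // in h2.
Qed.
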